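(* Let $H$ be a finite, connected, $d$-regular graph on $[n]$ containing a clique on vertices $v_0,v_1,\dots,v_\ell$ ($1\le\ell\le d$). Then for $0\le k\le \ell-1$: (i) $\Phi_{\ell-1,k}(x_{v_0},\dots,x_{v_k};x_{v_{k+1}},\dots,x_{v_\ell})\in\mathbb{I}(U(H))$; (ii) $\Phi_{\ell-1,k}(x_0,\dots,x_k;x_{k+1},\dots,x_\ell)$ is symmetric in the second set of variables $x_{k+1},\dots,x_\ell$; (iii) its total degree in $x_0,\dots,x_\ell$ is $2d-\ell+1-k$.
   Context: Let $\overline{a}=(a_{ij})_{0\le j\le i\le d}$ be $m=(d+1)(d+2)/2$ indeterminates, $a_{ji}=a_{ij}$, and $\Phi(x,y)=\sum_{i,j=0}^d a_{ij}x^iy^j$. Define $\Phi_0(x_0;x_1)=\Phi(x_0,x_1)$ and, for $\ell\ge2$, $\Phi_{\ell-1}(x_0;x_1,\dots,x_\ell)=\dfrac{\Phi_{\ell-2}(x_0;x_1,\dots,x_{\ell-1})-\Phi_{\ell-2}(x_0;x_1,\dots,x_{\ell-2},x_\ell)}{x_\ell-x_{\ell-1}}$. Then set $\Phi_{\ell-1,0}(x_0;x_1,\dots,x_\ell)=\Phi_{\ell-1}(x_0;x_1,\dots,x_\ell)$ and, for $k\ge1$, $\Phi_{\ell-1,k}(x_0,\dots,x_k;x_{k+1},\dots,x_\ell)=\big(\Phi_{\ell-1,k-1}(x_0,\dots,x_{k-2},x_k;x_{k-1},x_{k+1},\dots,x_\ell)-\Phi_{\ell-1,k-1}(x_0,\dots,x_{k-1};x_k,\dots,x_\ell)\big)/(x_{k-1}-x_k)$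 (a polynomial). With $E$ the edge set of $H$: $S(H)=\{\Phi(x_i,x_j):ij\in E\}\subseteq\mathbb{C}[\overline{a},x_1,\dots,x_n]$, $W(H)=\mathbb{V}(S(H))\subseteq\mathbb{C}^{m+n}$, $Z(H)=W(H)\cap\bigcup_{i>j}\mathbb{V}(x_i-x_j)$, $U(H)=\overline{W(H)\setminus Z(H)}$ (Zariski closure), and $\mathbb{I}(U(H))$ is its vanishing ideal. *)

(* Defs.v *)
From HB Require Import structures.
From mathcomp Require Import all_boot all_order all_algebra.
From mathcomp Require Import fingroup perm Rstruct complex mpoly.
From Stdlib Require Rdefinitions ClassicalEpsilon.


Import GRing.Theory.
Local Open Scope ring_scope.

Definition CC : closedFieldType := complex Rdefinitions.R.

(* Number m = (d+1)(d+2)/2 of the indeterminates a_ij, 0 <= j <= i <= d. *)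
Definition mA (d : nat) : nat := (d.+1 * d.+2)./2.

(* Index of a_ij (= a_ji) among 0, ..., mA d - 1 (triangular numbering). *)
Definition triIdx (i j : nat) : nat :=
  ((maxn i j * (maxn i j).+1)./2 + minn i j)%N.

(* The t-th variable of {mpoly CC[N]} (0 if t >= N, never used below). *)
Definition Xn (N t : nat) : {mpoly CC[N]} :=
  if insub t is Some i then 'X_i else 0.

(* In all uses below q is a nonzero difference of two distinct variables
   of a polynomial ring (a non-zero-divisor), and the division is exact. *)
Definition exdiv {P : nzRingType} (p q : P) : P :=
  ClassicalEpsilon.epsilon (inhabits 0) (fun r => p = q * r).

Section PhiDefs.
Context {P : comNzRingType}.
Variables (d : nat) (a : nat -> nat -> P).

Definition Phi0 (t0 t1 : P) : P :=
  \sum_(i < d.+1) \sum_(j < d.+1) a i j * t0 ^+ i * t1 ^+ j.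

(* PhiL j s = Phi_j(s_0; s_1, ..., s_{j+1}) *)
Fixpoint PhiL (j : nat) (s : seq P) : P :=
  match j with
  | 0 => Phi0 s`_0 s`_1
  | j'.+1 =>
      exdiv (PhiL j' (take j'.+2 s) - PhiL j' (rcons (take j'.+1 s) s`_j'.+2))
            (s`_j'.+2 - s`_j'.+1)
  end.

Definition swapNth (s : seq P) (i j : nat) : seq P :=
  set_nth 0 (set_nth 0 s i s`_j) j s`_i.

(* PhiLk L k s = Phi_{L,k}(s_0, ..., s_k; s_{k+1}, ..., s_{L+1}) *)
Fixpoint PhiLk (L k : nat) (s : seq P) : P :=
  match k with
  | 0 => PhiL L s
  | k'.+1 =>
      exdiv (PhiLk L k' (swapNth s k' k'.+1) - PhiLk L k' s)
            (s`_k' - s`_k'.+1)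
  end.
End PhiDefs.

(* vertices of H are 'I_n (i.e. [n] numbered from 0) *)

Definition avar (d n : nat) (i j : nat) : {mpoly CC[mA d + n]} :=
  Xn (mA d + n) (triIdx i j).

Definition xvar (d n : nat) (v : 'I_n) : {mpoly CC[mA d + n]} :=
  Xn (mA d + n) (mA d + v).

Definition Phi (d n : nat) (t0 t1 : {mpoly CC[mA d + n]}) :=
  Phi0 d (avar d n) t0 t1.

Definition point (N : nat) := 'I_N -> CC.

Definition Wset (d n : nat) (e : rel 'I_n) : point (mA d + n) -> Prop :=
  fun z => forall u v, e u v -> (Phi d n (xvar d n u) (xvar d n v)).@[z] = 0.

Definition Zset (d n : nat) (e : rel 'I_n) : point (mA d + n) -> Prop :=
  fun z => Wset d n e z /\
    exists i j : 'I_n, (j < i)%N /\ (xvar d n i - xvar d n j).@[z] = 0.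

Definition vanI {N : nat} (S : point N -> Prop) : {mpoly CC[N]} -> Prop :=
  fun p => forall z, S z -> p.@[z] = 0.
Definition zeroV {N : nat} (I : {mpoly CC[N]} -> Prop) : point N -> Prop :=
  fun z => forall p, I p -> p.@[z] = 0.

Definition zclosure {N : nat} (S : point N -> Prop) : point N -> Prop :=
  zeroV (vanI S).

Definition Uset (d n : nat) (e : rel 'I_n) : point (mA d + n) -> Prop :=
  zclosure (fun z => Wset d n e z /\ ~ Zset d n e z).

Definition gvar (d l : nat) (i : nat) : {mpoly CC[mA d + l.+1]} :=
  Xn (mA d + l.+1) (mA d + i).

Definition PhiGen (d l k : nat) : {mpoly CC[mA d + l.+1]} :=
  PhiLk d (fun i j => Xn (mA d + l.+1) (triIdx i j)) l.-1 k
        [seq gvar d l i | i <- iota 0 l.+1].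

Definition renameX (d l : nat) (sigma : 'S_l.+1) :
    (mA d + l.+1).-tuple {mpoly CC[mA d + l.+1]} :=
  [tuple (if (t < mA d)%N then Xn (mA d + l.+1) t
          else gvar d l (sigma (inord (t - mA d)))) | t < mA d + l.+1].

Definition xdeg (d l : nat) (p : {mpoly CC[mA d + l.+1]}) : nat :=
  \max_(mo <- msupp p)
     \sum_(t < mA d + l.+1 | (mA d <= t)%N) mo t.

Definition simple_graph {n : nat} (e : rel 'I_n) : Prop :=
  ssrbool.symmetric e /\ irreflexive e.
Definition connected_graph {n : nat} (e : rel 'I_n) : Prop :=
  forall u v, connect e u v.
Definition regular_graph {n : nat} (e : rel 'I_n) (d : nat) : Prop :=
  forall v, #|[set u | e v u]| = d.

(* Main.v *)
Require Import Defs.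
From HB Require Import structures.
From mathcomp Require Import all_boot all_order all_algebra.
From mathcomp Require Import fingroup perm Rstruct complex mpoly.
From mathcomp Require Import ring zify.
From Stdlib Require ClassicalEpsilon.
Import GRing.Theory Num.Theory.
Local Open Scope ring_scope.
Section H.
Context {P : comNzRingType}.

Fixpoint hn (r : nat) (s : seq P) : P :=
  if s is x :: s' then \sum_(t < r.+1) x ^+ t * hn (r - t) s' else (r == 0%N)%:R.

Lemma hn_nil r : hn r [::] = (r == 0%N)%:R. Proof. by []. Qed.

Lemma hn0 s : hn 0 s = 1.
Proof. elim: s => [|x s IH] //=; by rewrite big_ord1 expr0 mul1r subn0 IH. Qed.

Lemma hnS x s r : hn r.+1 (x :: s) = hn r.+1 s + x * hn r (x :: s).
Proof.
rewrite /= big_ord_recl /= expr0 mul1r subn0; congr (_ + _).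
rewrite big_distrr; apply: eq_bigr => t _ /=.
by rewrite /bump /= add1n subSS exprS mulrA.
Qed.

Lemma hn_cons_eq x s t : (forall r, hn r s = hn r t) -> forall r, hn r (x :: s) = hn r (x :: t).
Proof. by move=> H r /=; apply: eq_bigr => i _; rewrite H. Qed.

Lemma hnH1 x y s r : hn r.+1 (y :: s) - hn r.+1 (x :: s) = (y - x) * hn r (y :: x :: s).
Proof.
elim: r => [|r IH].
  by rewrite !hnS !hn0 mulr1; ring.
rewrite hnS [hn r.+2 (x :: s)]hnS [hn r.+1 (y :: x :: s)]hnS.
have -> : hn r.+1 (y :: s) = hn r.+1 (x :: s) + (y - x) * hn r (y :: x :: s).
  by rewrite -IH; ring.
ring.
Qed.

Lemma hn_swap x y s r : hn r (x :: y :: s) = hn r (y :: x :: s).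
Proof.
elim: r => [|r IH]; first by rewrite !hn0.
rewrite hnS [hn r.+1 (y :: x :: s)]hnS IH.
have := hnH1 x y s r => H.
have -> : hn r.+1 (y :: s) = hn r.+1 (x :: s) + (y - x) * hn r (y :: x :: s).
  by rewrite -H; ring.
ring.
Qed.

Lemma hn_rem x t r : x \in t -> hn r t = hn r (x :: rem x t).
Proof.
elim: t r => [|y t IH] r //.
rewrite in_cons; case: eqP => [<- _|neq xt].
  by have -> : rem x (x :: t) = t by rewrite /rem eqxx.
have -> : rem x (y :: t) = y :: rem x t.
  by rewrite [LHS]/rem; case: eqP => // yx; case: neq.
rewrite (@hn_cons_eq y t (x :: rem x t) (fun r => IH r xt)).
exact: hn_swap.
Qed.

Lemma hn_perm s t : perm_eq s t -> forall r, hn r s = hn r t.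
Proof.
elim: s t => [|x s IH] t.
  by move=> /perm_size /esym /size0nil -> r.
move=> pst r.
have xt : x \in t by rewrite -(perm_mem pst) mem_head.
rewrite (@hn_rem x t r xt); apply: hn_cons_eq => rr; apply: IH.
have := perm_to_rem xt => H.
by rewrite -(perm_cons x); apply: perm_trans pst H.
Qed.

Definition hz (r : int) (s : seq P) : P :=
  match r with Posz n => hn n s | Negz _ => 0 end.

Lemma hz_neg r s : r < 0 -> hz r s = 0.
Proof. by case: r. Qed.

Lemma hz0 s : hz 0 s = 1. Proof. exact: hn0. Qed.

Lemma hz_perm r s t : perm_eq s t -> hz r s = hz r t.
Proof. by case: r => //= n /hn_perm ->. Qed.
Arguments hz_perm r {s t}.


Lemma hzH1 x y s r : hz r (y :: s) - hz r (x :: s) = (y - x) * hz (r - 1) (y :: x :: s).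
Proof.
case: r => [[|n]|n].
- by rewrite !hz0 hz_neg // subrr mulr0.
- have -> : (Posz n.+1 - 1) = Posz n by rewrite -addn1 PoszD addrK.
  exact: hnH1.
- by rewrite !hz_neg // ?subrr ?mulr0.
Qed.

Lemma prc (s : seq P) x : perm_eq (rcons s x) (x :: s).
Proof. by rewrite perm_rcons perm_refl. Qed.

Lemma hzH1r A x y r : hz r (rcons A y) - hz r (rcons A x) = (y - x) * hz (r - 1) (rcons (rcons A y) x).
Proof.
rewrite (hz_perm r (prc A y)) (hz_perm r (prc A x)) hzH1.
congr (_ * _); apply: hz_perm; rewrite perm_sym.
apply: perm_trans (prc _ _) _.
apply: (@perm_trans _ (x :: y :: A)); first by rewrite perm_cons prc.
by rewrite -[x :: y :: A]/([:: x] ++ [:: y] ++ A) perm_catCA.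
Qed.

Lemma hzS x s r : hz r (x :: s) = hz r s + x * hz (r - 1) (x :: s).
Proof.
case: r => [[|n]|n].
- by rewrite !hz0 hz_neg // mulr0 addr0.
- have -> : (Posz n.+1 - 1) = Posz n by rewrite -addn1 PoszD addrK.
  exact: hnS.
- by rewrite !hz_neg // ?mulr0 ?addr0.
Qed.

Lemma hn_single x r : hn r [:: x] = x ^+ r.
Proof.
rewrite /= (bigD1 ord_max) //= subnn eqxx mulr1 big1 ?addr0 // => i ne.
have : (r - i != 0)%N by move: ne; rewrite -val_eqE /= => ne; move: (ltn_ord i); lia.
by move/negbTE => ->; rewrite mulr0.
Qed.

End H.
Arguments hz_perm {P} r {s t}.
Section C.
Context {P : comNzRingType}.
Variables (d : nat) (a : nat -> nat -> P).

Definition T (i j m k : nat) (s : seq P) : P :=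
  (-1) ^+ (m + k) *
  (hz (j%:Z - m%:Z) (take m.+2 s) * hz (i%:Z - k%:Z) (take k.+1 s)
   - hz (j%:Z - m%:Z - 1) (take m.+2 s) * hz (i%:Z - k%:Z + 1) (take k.+1 s)).

Definition Cf (m k : nat) (s : seq P) : P :=
  \sum_(i < d.+1) \sum_(j < d.+1) a i j * T i j m k s.

Lemma take_rc (A C : seq P) x : take (size A).+1 (A ++ x :: C) = rcons A x.
Proof. by rewrite take_cat ltnNge leqnSn /= subSn // subnn /= take0 cats1. Qed.

Lemma T_kstep i j m k A u w B : size A = k -> (k < m)%N ->
  T i j m k (A ++ w :: u :: B) - T i j m k (A ++ u :: w :: B)
  = (u - w) * T i j m k.+1 (A ++ u :: w :: B).
Proof.
move=> sA km; rewrite /T.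
have -> : take m.+2 (A ++ w :: u :: B) = A ++ w :: u :: take (m - k) B.
  rewrite take_cat sA ltnNge (_ : k <= m.+2)%N /=; last by lia.
  by rewrite (_ : m.+2 - k = (m - k).+2)%N //; lia.
have -> : take m.+2 (A ++ u :: w :: B) = A ++ u :: w :: take (m - k) B.
  rewrite take_cat sA ltnNge (_ : k <= m.+2)%N /=; last by lia.
  by rewrite (_ : m.+2 - k = (m - k).+2)%N //; lia.
have Pw : perm_eq (A ++ w :: u :: take (m - k) B) (A ++ u :: w :: take (m - k) B).
  by rewrite perm_cat2l -[w :: u :: _]/([:: w] ++ [:: u] ++ _) perm_catCA.
rewrite !(hz_perm _ Pw).
set S := A ++ u :: w :: take (m - k) B.
rewrite -sA !take_rc.
have -> : take (size A).+2 (A ++ u :: w :: B) = rcons (rcons A u) w.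
  rewrite take_cat ltnNge leqW //= (_ : (size A).+2 - size A = 2)%N; last by lia.
  by rewrite /= take0 -!cats1 -catA.
set r := (i%:Z - (size A)%:Z).
have -> : (i%:Z - (size A).+1%:Z) = r - 1 by rewrite /r -addn1 PoszD opprD addrA.
have -> : r - 1 + 1 = r by rewrite subrK.
have E1 := hzH1r A u w r.
have E2 := hzH1r A u w (r + 1).
rewrite addrK in E2.
have P1 : perm_eq (rcons (rcons A w) u) (rcons (rcons A u) w).
  rewrite -!cats1 -!catA /= perm_cat2l.
  by rewrite -[w :: u :: _]/([:: w] ++ [:: u] ++ [::]) perm_catCA.
rewrite (hz_perm _ P1) in E1; rewrite (hz_perm _ P1) in E2.
have F1 : hz r (rcons A w) = hz r (rcons A u) + (w - u) * hz (r - 1) (rcons (rcons A u) w).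
  by rewrite -E1; ring.
have F2 : hz (r + 1) (rcons A w) = hz (r + 1) (rcons A u) + (w - u) * hz r (rcons (rcons A u) w).
  by rewrite -E2; ring.
rewrite F1 F2 addnS exprS; ring.
Qed.

Lemma T_lstep i j m A u w : size A = m.+1 ->
  T i j m 0 (rcons A u) - T i j m 0 (rcons A w)
  = (w - u) * T i j m.+1 0 (rcons (rcons A u) w).
Proof.
move=> sA; rewrite /T.
have t1 : forall x, take 1 (rcons A x) = take 1 A.
  by move=> x; rewrite -cats1 takel_cat // sA.
have t2 : take 1 (rcons (rcons A u) w) = take 1 A.
  by rewrite -!cats1 -catA takel_cat // sA.
have t3 : forall x, take m.+2 (rcons A x) = rcons A x.
  by move=> x; rewrite take_oversize // size_rcons sA.
have t4 : take m.+3 (rcons (rcons A u) w) = rcons (rcons A u) w.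
  by rewrite take_oversize // !size_rcons sA.
rewrite !t1 t2 !t3 t4.
set r := (j%:Z - m%:Z).
have -> : (j%:Z - m.+1%:Z) = r - 1 by rewrite /r -addn1 PoszD opprD addrA.
have E1 := hzH1r A w u r.
have E2 := hzH1r A w u (r - 1).
have F1 : hz r (rcons A u) = hz r (rcons A w) + (u - w) * hz (r - 1) (rcons (rcons A u) w).
  by rewrite -E1; ring.
have F2 : hz (r - 1) (rcons A u) = hz (r - 1) (rcons A w) + (u - w) * hz (r - 1 - 1) (rcons (rcons A u) w).
  by rewrite -E2; ring.
rewrite F1 F2 addn0 addSn addn0 exprS; ring.
Qed.

Lemma hz_single (r : nat) (x : P) : hz r [:: x] = x ^+ r.
Proof. exact: hn_single. Qed.

Lemma Phi0_C x0 x1 s : Phi0 d a x0 x1 = Cf 0 0 (x0 :: x1 :: s).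
Proof.
rewrite /Phi0 /Cf; apply: eq_bigr => i _; apply: eq_bigr => j _.
have e2 : take 2 (x0 :: x1 :: s) = [:: x0; x1] by rewrite /= take0.
have e1 : take 1 (x0 :: x1 :: s) = [:: x0] by [].
rewrite /T e2 e1 addn0 expr0 mul1r !subr0 (hzS x0 [:: x1] j) -PoszD addn1 !hz_single exprS.
ring.
Qed.

End C.
Lemma exdivE {P : idomainType} (p q r : P) : q != 0 -> p = q * r -> exdiv p q = r.
Proof.
move=> nq e; rewrite /exdiv.
have h := ClassicalEpsilon.epsilon_spec (inhabits (0 : P)) (fun r => p = q * r) (ex_intro _ r e).
by apply: (mulfI nq); rewrite -h -e.
Qed.

Lemma swapNth_cat {P : comNzRingType} (A B : seq P) x y :
  swapNth (A ++ x :: y :: B) (size A) (size A).+1 = A ++ y :: x :: B.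
Proof. by elim: A => [|z A IH] //=; rewrite -IH. Qed.

Lemma decomp {P : comNzRingType} (s : seq P) k : (k.+1 < size s)%N ->
  s = take k s ++ s`_k :: s`_k.+1 :: drop k.+2 s.
Proof.
move=> h; rewrite -{1}(cat_take_drop k s) (drop_nth 0) ?(drop_nth 0 (n := k.+1)) //.
by apply: ltn_trans h.
Qed.

Lemma uniq_rc {P : comNzRingType} (s : seq P) m : uniq s -> (m.+2 < size s)%N ->
  uniq (rcons (take m.+1 s) s`_m.+2).
Proof.
move=> us h.
have := take_uniq m.+3 us.
rewrite (take_nth 0) // (take_nth 0) ?(ltn_trans _ h) //.
rewrite !rcons_uniq mem_rcons in_cons negb_or => /and3P [/andP [_ ->] _ ->] //.
Qed.

Section D.
Context {P : idomainType}.
Variables (d : nat) (a : nat -> nat -> P).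

Lemma Cf_take m k s : (k <= m.+1)%N -> Cf d a m k s = Cf d a m k (take m.+2 s).
Proof.
move=> km; rewrite /Cf /T; apply: eq_bigr => i _; apply: eq_bigr => j _.
by rewrite take_taker // take_takel.
Qed.

Lemma CstepL m s : uniq s -> (m.+3 <= size s)%N ->
  Cf d a m 0 (take m.+2 s) - Cf d a m 0 (rcons (take m.+1 s) s`_m.+2)
  = (s`_m.+2 - s`_m.+1) * Cf d a m.+1 0 s.
Proof.
move=> us hs.
have h1 : (m.+1 < size s)%N by apply: ltn_trans hs.
set A := take m.+1 s; set u := s`_m.+1; set w := s`_m.+2.
have tA : take m.+2 s = rcons A u by rewrite (take_nth 0).
have sA : size A = m.+1 by rewrite size_take h1.
rewrite tA (Cf_take _ _ s) // (take_nth 0 (n := m.+2)) // tA.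
rewrite /Cf -sumrB big_distrr; apply: eq_bigr => i _.
rewrite -sumrB big_distrr; apply: eq_bigr => j _.
by rewrite -mulrBr T_lstep // mulrCA.
Qed.

Lemma PhiL_C m s : uniq s -> (m.+2 <= size s)%N -> PhiL d a m s = Cf d a m 0 s.
Proof.
elim: m s => [|m IH] s us hs.
  case: s us hs => [|x0 [|x1 s]] //= _ _; exact: Phi0_C.
rewrite /=.
have h1 : (m.+1 < size s)%N by apply: ltn_trans hs.
have sA : size (take m.+1 s) = m.+1 by rewrite size_take h1.
have u1 : uniq (take m.+2 s) by rewrite take_uniq.
have z1 : (m.+2 <= size (take m.+2 s))%N by rewrite size_takel // ltnW.
have u2 : uniq (rcons (take m.+1 s) s`_m.+2) by apply: uniq_rc.
have z2 : leq m.+2 (size (rcons (take m.+1 s) s`_m.+2)) by rewrite size_rcons sA.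
rewrite (IH _ u1 z1) (IH _ u2 z2).
apply: exdivE; last exact: CstepL.
rewrite subr_eq0 nth_uniq //; lia.
Qed.

Lemma PhiL_step m s : uniq s -> (m.+3 <= size s)%N ->
  PhiL d a m (take m.+2 s) - PhiL d a m (rcons (take m.+1 s) s`_m.+2)
  = (s`_m.+2 - s`_m.+1) * PhiL d a m.+1 s.
Proof.
move=> us hs.
have h1 : (m.+1 < size s)%N by apply: ltn_trans hs.
have sA : size (take m.+1 s) = m.+1 by rewrite size_take h1.
have u1 : uniq (take m.+2 s) by rewrite take_uniq.
have z1 : (m.+2 <= size (take m.+2 s))%N by rewrite size_takel // ltnW.
have u2 : uniq (rcons (take m.+1 s) s`_m.+2) by apply: uniq_rc.
have z2 : leq m.+2 (size (rcons (take m.+1 s) s`_m.+2)) by rewrite size_rcons sA.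
rewrite (PhiL_C _ _ u1 z1) (PhiL_C _ _ u2 z2) (PhiL_C _ _ us) ?CstepL // ltnW.
Qed.

Lemma CstepK m k s : uniq s -> (m.+2 <= size s)%N -> (k < m)%N ->
  Cf d a m k (swapNth s k k.+1) - Cf d a m k s = (s`_k - s`_k.+1) * Cf d a m k.+1 s.
Proof.
move=> us hs km.
have hk : (k.+1 < size s)%N by lia.
have [A [u [w [B [ds sA]]]]] : exists A u w B, s = A ++ u :: w :: B /\ size A = k.
  exists (take k s), s`_k, s`_k.+1, (drop k.+2 s); split; first exact: decomp.
  by rewrite size_takel //; lia.
subst s.
have n1 : (A ++ u :: w :: B)`_k = u by rewrite nth_cat -sA ltnn subnn.
have n2 : (A ++ u :: w :: B)`_k.+1 = w by rewrite nth_cat -sA ltnNge leqnSn /= subSn // subnn.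
have sw : swapNth (A ++ u :: w :: B) k k.+1 = A ++ w :: u :: B by rewrite -sA swapNth_cat.
rewrite n1 n2 sw.
rewrite /Cf -sumrB big_distrr; apply: eq_bigr => i _.
rewrite -sumrB big_distrr; apply: eq_bigr => j _.
by rewrite -mulrBr T_kstep // mulrCA.
Qed.

Lemma swap_perm (s : seq P) k : (k.+1 < size s)%N -> perm_eq (swapNth s k k.+1) s.
Proof.
move=> hk.
have [A [u [w [B [ds sA]]]]] : exists A u w B, s = A ++ u :: w :: B /\ size A = k.
  exists (take k s), s`_k, s`_k.+1, (drop k.+2 s); split; first exact: decomp.
  by rewrite size_takel //; lia.
subst s; rewrite -sA swapNth_cat.
by rewrite perm_cat2l -[w :: u :: _]/([:: w] ++ [:: u] ++ _) perm_catCA.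
Qed.

Lemma PhiLk_C m k s : uniq s -> (m.+2 <= size s)%N -> (k <= m)%N -> PhiLk d a m k s = Cf d a m k s.
Proof.
elim: k s => [|k IH] s us hs km; first exact: PhiL_C.
rewrite /=.
have hk : (k.+1 < size s)%N by lia.
have pw := @swap_perm s k hk.
have u1 : uniq (swapNth s k k.+1) by rewrite (perm_uniq pw).
have z1 : leq m.+2 (size (swapNth s k k.+1)) by rewrite (perm_size pw).
rewrite (IH _ u1 z1 (ltnW km)) (IH _ us hs (ltnW km)).
apply: exdivE; last exact: CstepK.
rewrite subr_eq0 nth_uniq //; [by rewrite neq_ltn ltnSn | exact: ltnW].
Qed.

Lemma PhiLk_step m k s : uniq s -> (m.+2 <= size s)%N -> (k < m)%N ->
  PhiLk d a m k (swapNth s k k.+1) - PhiLk d a m k s = (s`_k - s`_k.+1) * PhiLk d a m k.+1 s.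
Proof.
move=> us hs km.
have hk : (k.+1 < size s)%N by lia.
have pw := @swap_perm s k hk.
have u1 : uniq (swapNth s k k.+1) by rewrite (perm_uniq pw).
have z1 : leq m.+2 (size (swapNth s k k.+1)) by rewrite (perm_size pw).
rewrite (PhiLk_C _ _ _ u1 z1 (ltnW km)) (PhiLk_C _ _ _ us hs (ltnW km)) (PhiLk_C _ _ _ us hs km).
exact: CstepK.
Qed.

End D.
Section E.
Context {P : idomainType} {K : idomainType} (f : {rmorphism P -> K}).
Variables (d : nat) (a : nat -> nat -> P) (Q : seq P).
Hypothesis HQ : forall x y, x \in Q -> y \in Q -> x != y -> f (Phi0 d a x y) = 0 /\ f x != f y.

Lemma all_take_ (s : seq P) n : all (mem Q) s -> all (mem Q) (take n s).
Proof. by move=> /allP h; apply/allP => x /mem_take /h. Qed.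

Lemma vanL m s : uniq s -> all (mem Q) s -> (m.+2 <= size s)%N -> f (PhiL d a m s) = 0.
Proof.
elim: m s => [|m IH] s us qs hs.
  case: s us qs hs => [|x0 [|x1 s]] // us qs _.
  have q0 : x0 \in Q by have /allP := qs; apply; rewrite mem_head.
  have q1 : x1 \in Q by have /allP := qs; apply; rewrite !in_cons eqxx orbT.
  have n01 : x0 != x1 by move: us => /= /andP [] /negP h _; apply/eqP => e; apply: h; rewrite e mem_head.
  by have [] := HQ _ _ q0 q1 n01.
have E := PhiL_step d a _ _ us hs.
have h1 : (m.+1 < size s)%N by apply: ltn_trans hs.
have sA : size (take m.+1 s) = m.+1 by rewrite size_take h1.
have u1 : uniq (take m.+2 s) by rewrite take_uniq.
have z1 : leq m.+2 (size (take m.+2 s)) by rewrite size_takel // ltnW.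
have u2 : uniq (rcons (take m.+1 s) s`_m.+2) by apply: uniq_rc.
have z2 : leq m.+2 (size (rcons (take m.+1 s) s`_m.+2)) by rewrite size_rcons sA.
have qn : s`_m.+2 \in Q by have /allP := qs; apply; rewrite mem_nth.
have qn1 : s`_m.+1 \in Q by have /allP := qs; apply; rewrite mem_nth.
have q2 : all (mem Q) (rcons (take m.+1 s) s`_m.+2) by rewrite all_rcons; apply/andP; split; [exact: qn | exact: all_take_].
have := congr1 f E; rewrite rmorphB rmorphM IH ?all_take_ // IH // subrr => /esym /eqP.
rewrite mulf_eq0 => /orP [|/eqP //].
rewrite rmorphB subr_eq0 => e; exfalso; move: e; apply/negP.
apply: (proj2 (HQ _ _ qn qn1 _)).
by rewrite nth_uniq // neq_ltn ltnSn ?orbT.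
Qed.

Lemma vanLk m k s : uniq s -> all (mem Q) s -> (m.+2 <= size s)%N -> (k <= m)%N ->
  f (PhiLk d a m k s) = 0.
Proof.
elim: k s => [|k IH] s us qs hs km; first exact: vanL.
have hk : (k.+1 < size s)%N by lia.
have pw := @swap_perm P s k hk.
have u1 : uniq (swapNth s k k.+1) by rewrite (perm_uniq pw).
have z1 : leq m.+2 (size (swapNth s k k.+1)) by rewrite (perm_size pw).
have q1 : all (mem Q) (swapNth s k k.+1) by rewrite (perm_all _ pw).
have E := PhiLk_step d a _ _ _ us hs km.
have qn : s`_k \in Q by have /allP := qs; apply; rewrite mem_nth // ltnW.
have qn1 : s`_k.+1 \in Q by have /allP := qs; apply; rewrite mem_nth.
have := congr1 f E; rewrite rmorphB rmorphM IH // ?(ltnW km) // IH // ?(ltnW km) // subrr => /esym /eqP.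
rewrite mulf_eq0 => /orP [|/eqP //].
rewrite rmorphB subr_eq0 => e; exfalso; move: e; apply/negP.
apply: (proj2 (HQ _ _ qn qn1 _)).
rewrite nth_uniq //; [by rewrite neq_ltn ltnSn ?orbT | exact: ltnW].
Qed.
End E.
Section M.
Variable N : nat.
Local Notation MP := {mpoly CC[N]}.
Variable F : 'X_{1..N} -> int.
Hypothesis FD : forall m1 m2, F (m1 + m2)%MM = F m1 + F m2.

Definition homF (D : int) (p : MP) := forall mo, mo \in msupp p -> F mo = D.
Definition bndF (D : int) (p : MP) := forall mo, mo \in msupp p -> F mo <= D.

Lemma homF0 D : homF D 0. Proof. by move=> mo; rewrite msupp0. Qed.

Lemma homF_X m : homF (F m) 'X_[m].
Proof. by move=> mo; rewrite msuppX mem_seq1 => /eqP ->. Qed.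

Lemma homFD D p q : homF D p -> homF D q -> homF D (p + q).
Proof. by move=> hp hq mo /msuppD_le; rewrite mem_cat => /orP [/hp|/hq]. Qed.

Lemma homFN D p : homF D p -> homF D (- p).
Proof. by move=> hp mo; rewrite (perm_mem (msuppN p)) => /hp. Qed.

Lemma homFB D p q : homF D p -> homF D q -> homF D (p - q).
Proof. by move=> hp hq; apply: homFD => //; apply: homFN. Qed.

Lemma homFM D1 D2 p q : homF D1 p -> homF D2 q -> homF (D1 + D2) (p * q).
Proof.
move=> hp hq mo /msuppM_le /allpairsP [[m1 m2] /= [h1 h2 ->]].
by rewrite FD (hp _ h1) (hq _ h2).
Qed.

Lemma homF_sum (I : Type) (r : seq I) (Pr : pred I) (G : I -> MP) D :
  (forall i, Pr i -> homF D (G i)) -> homF D (\sum_(i <- r | Pr i) G i).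
Proof.
move=> h; elim/big_ind: _ => //; [exact: homF0 | exact: homFD].
Qed.

Lemma bndF0 D : bndF D 0. Proof. by move=> mo; rewrite msupp0. Qed.

Lemma bndFD D p q : bndF D p -> bndF D q -> bndF D (p + q).
Proof. by move=> hp hq mo /msuppD_le; rewrite mem_cat => /orP [/hp|/hq]. Qed.

Lemma bndF_sum (I : Type) (r : seq I) (Pr : pred I) (G : I -> MP) D :
  (forall i, Pr i -> bndF D (G i)) -> bndF D (\sum_(i <- r | Pr i) G i).
Proof.
move=> h; elim/big_ind: _ => //; [exact: bndF0 | exact: bndFD].
Qed.

Lemma homF_bnd D D' p : homF D p -> D <= D' -> bndF D' p.
Proof. by move=> h le mo /h ->. Qed.

Hypothesis F0 : F 0%MM = 0.

Lemma homF1 : homF 0 1.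
Proof. by move=> mo; rewrite msupp1 mem_seq1 => /eqP ->. Qed.

Lemma homFX D p n : homF D p -> homF (D * n%:Z) (p ^+ n).
Proof.
move=> hp; elim: n => [|n IH]; first by rewrite mulr0 expr0; exact: homF1.
rewrite exprS -addn1 PoszD mulrDr mulr1 addrC; exact: homFM.
Qed.

Lemma homF_hn (c : int) (s : seq MP) n : (forall x, x \in s -> homF c x) -> homF (c * n%:Z) (hn n s).
Proof.
elim: s n => [|x s IH] n hs /=.
  case: n => [|n] /=; first by rewrite mulr0; exact: homF1.
  exact: homF0.
apply: homF_sum => t _.
have -> : c * n%:Z = c * t%:Z + c * (n - t)%N%:Z.
  by rewrite -mulrDr -PoszD subnKC // -ltnS.
apply: homFM; first by apply: homFX; apply: hs; rewrite mem_head.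
by apply: IH => y ys; apply: hs; rewrite in_cons ys orbT.
Qed.

Lemma homF_sign n : homF 0 ((-1) ^+ n : MP).
Proof.
have -> : (0 : int) = 0 * n%:Z by rewrite mul0r.
apply: homFX; apply: homFN; exact: homF1.
Qed.

End M.

Section M2.
Variables (N b : nat).
Local Notation MP := {mpoly CC[N]}.

Definition wtZ (mo : 'X_{1..N}) : int := (\sum_(t < N | (b <= t)%N) mo t)%N%:Z.
Definition aZ (mo : 'X_{1..N}) : int := (\sum_(t < N | (t < b)%N) mo t)%N%:Z.

Lemma wtZD m1 m2 : wtZ (m1 + m2)%MM = wtZ m1 + wtZ m2.
Proof. by rewrite /wtZ -PoszD -big_split /=; congr Posz; apply: eq_bigr => i _; rewrite mnmDE. Qed.
Lemma aZD m1 m2 : aZ (m1 + m2)%MM = aZ m1 + aZ m2.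
Proof. by rewrite /aZ -PoszD -big_split /=; congr Posz; apply: eq_bigr => i _; rewrite mnmDE. Qed.
Lemma wtZ0 : wtZ 0%MM = 0.
Proof. by rewrite /wtZ big1 // => i _; rewrite mnm0E. Qed.
Lemma aZ0 : aZ 0%MM = 0.
Proof. by rewrite /aZ big1 // => i _; rewrite mnm0E. Qed.

Lemma wtZU (i : 'I_N) : wtZ U_(i)%MM = if (b <= i)%N then 1 else 0.
Proof.
rewrite /wtZ; case: (leqP b i) => bi.
  rewrite (bigD1 i) //= mnm1E eqxx big1 ?addn0 // => t /andP [_ ne].
  by rewrite mnm1E eq_sym (negbTE ne).
rewrite big1 // => t bt; rewrite mnm1E; case: eqP => [e|] //.
by move: bt; rewrite -e; lia.
Qed.

Lemma aZU (i : 'I_N) : aZ U_(i)%MM = if (i < b)%N then 1 else 0.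
Proof.
rewrite /aZ; case: (ltnP i b) => bi.
  rewrite (bigD1 i) //= mnm1E eqxx big1 ?addn0 // => t /andP [_ ne].
  by rewrite mnm1E eq_sym (negbTE ne).
rewrite big1 // => t bt; rewrite mnm1E; case: eqP => [e|] //.
by move: bt; rewrite -e; lia.
Qed.

Lemma aZ0_coord (mo : 'X_{1..N}) (t : 'I_N) : aZ mo = 0 -> (t < b)%N -> mo t = 0%N.
Proof.
rewrite /aZ => /eqP; rewrite eqz_nat => /eqP h tb.
move: h; rewrite (bigD1 t) //=; lia.
Qed.

End M2.
Section Map.
Context {P K : comNzRingType} (f : {rmorphism P -> K}).

Lemma hn_map r s : f (hn r s) = hn r (map f s).
Proof.
elim: s r => [|x s IH] r; first by rewrite /= rmorph_nat.
rewrite [hn r _]/= rmorph_sum; apply: eq_bigr => t _.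
by rewrite rmorphM rmorphXn IH.
Qed.

Lemma hz_map r s : f (hz r s) = hz r (map f s).
Proof. by case: r => n; rewrite /= ?hn_map ?rmorph0. Qed.

Lemma T_map i j m k s : f (T i j m k s) = T i j m k (map f s).
Proof.
by rewrite /T rmorphM rmorphXn rmorphN rmorph1 rmorphB !rmorphM !hz_map !map_take.
Qed.

Lemma Cf_map d a m k s : f (Cf d a m k s) = Cf d (fun i j => f (a i j)) m k (map f s).
Proof.
rewrite /Cf rmorph_sum; apply: eq_bigr => i _; rewrite rmorph_sum; apply: eq_bigr => j _.
by rewrite rmorphM T_map.
Qed.
End Map.

Lemma Cf_ext {P : comNzRingType} d (a : nat -> nat -> P) m k s t :
  perm_eq (take m.+2 s) (take m.+2 t) -> take k.+1 s = take k.+1 t -> Cf d a m k s = Cf d a m k t.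
Proof.
move=> p e; rewrite /Cf; apply: eq_bigr => i _; apply: eq_bigr => j _.
by rewrite /T e !(hz_perm _ p).
Qed.
Lemma XnE N t (h : (t < N)%N) : Xn N t = 'X_(Ordinal h).
Proof. by rewrite /Xn insubT. Qed.
Arguments XnE {N t}.

Lemma X_inj N (i j : 'I_N) : ('X_i : {mpoly CC[N]}) = 'X_j -> i = j.
Proof.
move/(congr1 (mcoeff U_(i))); rewrite !mcoeffXU eqxx.
by case: eqP => // _ /eqP; rewrite oner_eq0.
Qed.

Lemma triIdx_lt d i j : (i <= d)%N -> (j <= d)%N -> (triIdx i j < mA d)%N.
Proof. rewrite /triIdx /mA -!divn2 => hi hj. nia. Qed.

Lemma triIdx_eq d i j : (i <= d)%N -> (j <= d)%N -> triIdx i j = triIdx d d -> i = d /\ j = d.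
Proof.
rewrite /triIdx !maxnn !minnn -!divn2 => hi hj.
case: (leqP i j) => ij.
  move=> e.
  have jd : j = d.
    apply/eqP; rewrite eqn_leq hj /=; apply/negP => /negP; rewrite -ltnNge => jd.
    have : (j * j.+1 %/ 2 + i < d * d.+1 %/ 2 + d)%N; last by rewrite e ltnn.
    have : (j.+1 * j.+2 %/ 2 <= d * d.+1 %/ 2)%N by apply: leq_div2r; apply: leq_mul.
    have : (j.+1 * j.+2 %/ 2 = j * j.+1 %/ 2 + j.+1)%N.
      rewrite (_ : j.+1 * j.+2 = j * j.+1 + j.+1 * 2)%N; last by ring.
      by rewrite divnDMl.
    lia.
  subst j; split => //; lia.
move=> e.
have id : i = d.
  apply/eqP; rewrite eqn_leq hi /=; apply/negP => /negP; rewrite -ltnNge => jd.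
  have : (i * i.+1 %/ 2 + j < d * d.+1 %/ 2 + d)%N; last by rewrite e ltnn.
  have : (i.+1 * i.+2 %/ 2 <= d * d.+1 %/ 2)%N by apply: leq_div2r; apply: leq_mul.
  have : (i.+1 * i.+2 %/ 2 = i * i.+1 %/ 2 + i.+1)%N.
    rewrite (_ : i.+1 * i.+2 = i * i.+1 + i.+1 * 2)%N; last by ring.
    by rewrite divnDMl.
  lia.
subst i; lia.
Qed.
Lemma Cf_aext {P : comNzRingType} d (a a' : nat -> nat -> P) m k s :
  (forall i j, (i < d.+1)%N -> (j < d.+1)%N -> a i j = a' i j) -> Cf d a m k s = Cf d a' m k s.
Proof. by move=> h; rewrite /Cf; apply: eq_bigr => i _; apply: eq_bigr => j _; rewrite h. Qed.

Lemma xvar_inj d n : injective (xvar d n).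
Proof.
move=> u w; rewrite /xvar.
have hu : (mA d + u < mA d + n)%N by rewrite ltn_add2l.
have hw : (mA d + w < mA d + n)%N by rewrite ltn_add2l.
rewrite (XnE hu) (XnE hw) => /X_inj /(congr1 val) /= /eqP.
by rewrite eqn_add2l => /eqP /val_inj.
Qed.

Lemma partI (n d l : nat) (e : rel 'I_n) (v : 'I_l.+1 -> 'I_n) k :
  (1 <= l)%N -> injective v -> (forall i j, i != j -> e (v i) (v j)) -> (k <= l.-1)%N ->
  vanI (Uset d n e)
    (PhiLk d (avar d n) l.-1 k [seq xvar d n (v i) | i <- enum 'I_l.+1]).
Proof.
move=> hl inj cl hk z Uz; apply: Uz => z' [Wz nZz].
set s := [seq xvar d n (v i) | i <- enum 'I_l.+1].
have us : uniq s.
  rewrite map_inj_uniq ?enum_uniq // => i j /xvar_inj; exact: inj.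
have ss : (l.-1.+2 <= size s)%N by rewrite size_map size_enum_ord; lia.
have qs : all (mem s) s by apply/allP.
apply: (@vanLk _ _ (meval z') d (avar d n) s _ l.-1 k s us qs ss hk).
move=> x y /mapP [i _ ->] /mapP [j _ ->] nxy.
have nij : i != j by apply: contra nxy => /eqP ->.
split; first by apply: Wz; exact: cl.
apply/negP => /eqP exy; apply: nZz; split => //.
have nv : v i != v j by apply: contra nij => /eqP /inj ->.
case: (ltngtP (v i) (v j)) => c.
- by exists (v j), (v i); split => //; rewrite mevalB exy subrr.
- by exists (v i), (v j); split => //; rewrite mevalB exy subrr.
- by move: nv; rewrite (val_inj c) eqxx.
Qed.
Lemma uniqG d l : uniq [seq gvar d l i | i <- iota 0 l.+1].
Proof.
rewrite map_inj_in_uniq ?iota_uniq // => i j; rewrite !mem_iota /= !add0n => hi hj.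
rewrite /gvar.
have hu : (mA d + i < mA d + l.+1)%N by rewrite ltn_add2l.
have hw : (mA d + j < mA d + l.+1)%N by rewrite ltn_add2l.
rewrite (XnE hu) (XnE hw) => /X_inj /(congr1 val) /= /eqP.
by rewrite eqn_add2l => /eqP.
Qed.

Lemma PhiGenE d l k : (1 <= l)%N -> (k <= l.-1)%N ->
  PhiGen d l k = Cf d (fun i j => Xn (mA d + l.+1) (triIdx i j)) l.-1 k
                    [seq gvar d l i | i <- iota 0 l.+1].
Proof.
move=> hl hk; rewrite /PhiGen PhiLk_C //; first exact: uniqG.
by rewrite size_map size_iota; lia.
Qed.

Lemma renameX_nth d l (sigma : 'S_l.+1) (t : nat) (h : (t < mA d + l.+1)%N) :
  (renameX d l sigma)`_t = (if (t < mA d)%N then Xn (mA d + l.+1) t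
          else gvar d l (sigma (inord (t - mA d)))).
Proof.
have -> : t = Ordinal h by [].
by rewrite -tnth_nth tnth_mktuple.
Qed.

Lemma partII d l k (sigma : 'S_l.+1) : (1 <= l)%N -> (k <= l.-1)%N ->
  (forall i : 'I_l.+1, (i <= k)%N -> sigma i = i) ->
  comp_mpoly (renameX d l sigma) (PhiGen d l k) = PhiGen d l k.
Proof.
move=> hl hk hs; rewrite PhiGenE // Cf_map.
set f := comp_mpoly (renameX d l sigma).
rewrite (@Cf_aext _ d _ (fun i j => Xn (mA d + l.+1) (triIdx i j))); last first.
  move=> i j hi hj.
  have ht : (triIdx i j < mA d)%N by apply: triIdx_lt.
  have ht' : (triIdx i j < mA d + l.+1)%N by apply: leq_trans ht (leq_addr _ _).
  rewrite (XnE ht'); change (comp_mpoly (renameX d l sigma) 'X_(Ordinal ht') = 'X_(Ordinal ht')).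
  rewrite comp_mpolyXU renameX_nth //; case: ifP => [_|/negP []] //; exact: XnE.
have fG : map (comp_mpoly (renameX d l sigma)) [seq gvar d l i | i <- iota 0 l.+1]
          = [seq gvar d l (sigma (inord i)) | i <- iota 0 l.+1].
  rewrite -map_comp; apply/eq_in_map => i; rewrite mem_iota add0n /= => hi.
  have hu : (mA d + i < mA d + l.+1)%N by rewrite ltn_add2l.
  rewrite /gvar (XnE hu) comp_mpolyXU renameX_nth //; case: ifP => [/= h|_]; first by lia.
  by rewrite /= addKn.
change (Cf d (fun i j => Xn (mA d + l.+1) (triIdx i j)) l.-1 k
   (map (comp_mpoly (renameX d l sigma)) [seq gvar d l i | i <- iota 0 l.+1]) =
   Cf d (fun i j => Xn (mA d + l.+1) (triIdx i j)) l.-1 k [seq gvar d l i | i <- iota 0 l.+1]).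
rewrite fG; apply: Cf_ext.
  rewrite !take_oversize ?size_map ?size_iota; try lia.
  have e1 : [seq gvar d l (sigma (inord i)) | i <- iota 0 l.+1]
      = map (fun o : 'I_l.+1 => gvar d l (val o)) (map sigma (enum 'I_l.+1)).
    by rewrite -val_enum_ord -!map_comp; apply/eq_map => o /=; rewrite inord_val.
  have e2 : [seq gvar d l i | i <- iota 0 l.+1]
      = map (fun o : 'I_l.+1 => gvar d l (val o)) (enum 'I_l.+1).
    by rewrite -val_enum_ord -map_comp.
  rewrite e1 e2; apply: perm_map.
  apply: uniq_perm; first by rewrite map_inj_uniq ?enum_uniq //; exact: perm_inj.
    exact: enum_uniq.
  move=> x; apply/mapP/idP => [_|_]; first by rewrite mem_enum.
  by exists ((sigma^-1)%g x); [rewrite mem_enum | rewrite permKV].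
rewrite -!map_take; apply/eq_in_map => i; rewrite take_iota mem_iota add0n => hi /=.
move: hi => /andP [_]; rewrite leq_min => /andP [hik hil].
have := hs (inord i); rewrite inordK // => -> //.
by rewrite inordK.
Qed.
Lemma hn_zero0 {P : comNzRingType} r (s : seq P) : hn r (0 :: s) = hn r s.
Proof.
rewrite [LHS]/= big_ord_recl expr0 mul1r subn0 big1 ?addr0 // => t _.
by rewrite expr0n /= mul0r.
Qed.

Lemma hn_nseq0 {P : comNzRingType} r c : hn r (nseq c (0 : P)) = hn r [::].
Proof. by elim: c r => [|c IH] r //=; rewrite -/(hn r (0 :: nseq c 0)) hn_zero0 IH. Qed.

Lemma hn_1z {P : comNzRingType} r c : hn r (1 :: nseq c (0 : P)) = 1.
Proof.
rewrite (@hn_cons_eq _ 1 _ [::]) => [|rr]; last exact: hn_nseq0.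
by rewrite hn_single expr1n.
Qed.

Lemma hn_cons {P : comNzRingType} r x (s : seq P) : hn r (x :: s) = \sum_(t < r.+1) x ^+ t * hn (r - t) s.
Proof. by []. Qed.

Lemma hn_11z {P : comNzRingType} r c : hn r (1 :: 1 :: nseq c (0 : P)) = r.+1%:R.
Proof.
rewrite hn_cons.
rewrite (eq_bigr (fun _ => 1)) => [|t _]; last by rewrite expr1n mul1r hn_1z.
by rewrite sumr_const card_ord.
Qed.

Section HomT.
Variable N : nat.
Local Notation MP := {mpoly CC[N]}.
Variable F : 'X_{1..N} -> int.
Hypothesis FD : forall m1 m2, F (m1 + m2)%MM = F m1 + F m2.
Hypothesis F0 : F 0%MM = 0.

Lemma homF_hz (c r : int) (s : seq MP) : (forall x, x \in s -> homF N F c x) -> homF N F (c * r) (hz r s).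
Proof.
case: r => n hs /=; last exact: homF0.
exact: (@homF_hn _ _ FD F0).
Qed.

Lemma homF_T (c : int) i j m k (s : seq MP) : (forall x, x \in s -> homF N F c x) ->
  homF N F (c * ((j%:Z - m%:Z) + (i%:Z - k%:Z))) (T i j m k s).
Proof.
move=> hs.
have h1 : forall n x, x \in take n s -> homF N F c x by move=> n x /mem_take; apply: hs.
rewrite /T -[X in homF N F X]add0r; apply: (@homFM _ _ FD); first exact: (@homF_sign _ _ FD F0).
apply: homFB => //.
  rewrite mulrDr; apply: (@homFM _ _ FD); apply: homF_hz => x; exact: h1.
have -> : c * ((j%:Z - m%:Z) + (i%:Z - k%:Z)) = c * (j%:Z - m%:Z - 1) + c * (i%:Z - k%:Z + 1).
  by ring.
apply: (@homFM _ _ FD); apply: homF_hz => x; exact: h1.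
Qed.
End HomT.
Lemma hzP {P : comNzRingType} n (s : seq P) : hz (Posz n) s = hn n s.
Proof. by []. Qed.

Lemma Tval_nz (d m k : nat) : (m < d)%N -> (k <= m)%N -> T d d m k (1 :: 1 :: nseq m (0:CC)) != 0.
Proof.
move=> md km; rewrite /T.
have tS : take m.+2 (1 :: 1 :: nseq m (0:CC)) = 1 :: 1 :: nseq m 0 by rewrite take_oversize // /= size_nseq.
rewrite tS.
have a1 : d%:Z - m%:Z = Posz (d - m - 1).+1 by rewrite subzn ?(ltnW md) //; congr Posz; lia.
have a2 : d%:Z - m%:Z - 1 = Posz (d - m - 1) by rewrite a1 -addn1 PoszD addrK.
have b1 : d%:Z - k%:Z = Posz (d - k) by rewrite subzn //; lia.
have b2 : d%:Z - k%:Z + 1 = Posz (d - k).+1 by rewrite b1 -addn1 PoszD.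
rewrite a2 a1 b2 b1 !hzP !hn_11z mulf_eq0 signr_eq0 orFb.
case: k km a1 a2 b1 b2 => [|k'] km _ _ _ _.

  rewrite (_ : take 1 _ = 1 :: nseq 0 (0:CC)) // !hn_1z !mulr1 -natrB // subSS subSnn.
  by rewrite oner_eq0.
rewrite (_ : take k'.+2 _ = 1 :: 1 :: nseq k' (0:CC)); last by rewrite /= take_nseq // ltnW.
rewrite !hn_11z -!natrM -natrB; last by nia.
rewrite pnatr_eq0; nia.
Qed.

Lemma partIII d l k : (1 <= l <= d)%N -> (k <= l.-1)%N ->
  xdeg d l (PhiGen d l k) = (2 * d + 1 - l - k)%N.
Proof.
move=> /andP [hl ld] hk.
rewrite PhiGenE //.
set G := [seq gvar d l i | i <- iota 0 l.+1].
set A := fun i j => Xn (mA d + l.+1) (triIdx i j).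
set m := l.-1.
have lm : l = m.+1 by rewrite /m; lia.
set Dm := (2 * d + 1 - l - k)%N.
have F1D := wtZD (mA d + l.+1) (mA d). have F10 := wtZ0 (mA d + l.+1) (mA d).
have F2D := aZD (mA d + l.+1) (mA d). have F20 := aZ0 (mA d + l.+1) (mA d).
have hG : forall x, x \in G -> homF (mA d + l.+1) (wtZ (mA d + l.+1) (mA d)) 1 x /\ homF (mA d + l.+1) (aZ (mA d + l.+1) (mA d)) 0 x.
  move=> x; rewrite /G; case/mapP => i; rewrite mem_iota add0n => hi ->.
  have hu : ((mA d) + i < (mA d + l.+1))%N by rewrite ltn_add2l.
  rewrite /gvar (XnE hu); split.
  - by have := homF_X (mA d + l.+1) (wtZ (mA d + l.+1) (mA d)) U_(Ordinal hu); rewrite wtZU /= leq_addr.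
  - by have := homF_X (mA d + l.+1) (aZ (mA d + l.+1) (mA d)) U_(Ordinal hu); rewrite aZU /= ltnNge leq_addr.
have hA : forall i j, (i < d.+1)%N -> (j < d.+1)%N -> homF (mA d + l.+1) (wtZ (mA d + l.+1) (mA d)) 0 (A i j).
  move=> i j hi hj.
  have ht : (triIdx i j < (mA d))%N by apply: triIdx_lt.
  have ht' : (triIdx i j < (mA d + l.+1))%N by apply: leq_trans ht (leq_addr _ _).
  by rewrite /A (XnE ht'); have := homF_X (mA d + l.+1) (wtZ (mA d + l.+1) (mA d)) U_(Ordinal ht'); rewrite wtZU /= leqNgt ht.
have hT1 : forall i j, homF (mA d + l.+1) (wtZ (mA d + l.+1) (mA d)) ((j%:Z - m%:Z) + (i%:Z - k%:Z)) (T i j m k G).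
  move=> i j; have := @homF_T _ _ F1D F10 1 i j m k G (fun x hx => (hG x hx).1).
  by rewrite mul1r.
have hT2 : forall i j, homF (mA d + l.+1) (aZ (mA d + l.+1) (mA d)) 0 (T i j m k G).
  move=> i j; have := @homF_T _ _ F2D F20 0 i j m k G (fun x hx => (hG x hx).2).
  by rewrite mul0r.
have ub : bndF (mA d + l.+1) (wtZ (mA d + l.+1) (mA d)) Dm%:Z (Cf d A m k G).
  rewrite /Cf; apply: bndF_sum => i _; apply: bndF_sum => j _.
  apply: (@homF_bnd _ _ (0 + ((j%:Z - m%:Z) + (i%:Z - k%:Z)))).
    by apply: (@homFM _ _ F1D) => //; apply: hA.
  have := ltn_ord i; have := ltn_ord j; rewrite /Dm; lia.
have md : (m < d)%N by rewrite /m; lia.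
have km : (k <= m)%N by [].
have nz : T d d m k G != 0.
  pose z : 'I_(mA d + l.+1) -> CC := fun t => if ((mA d <= t) && (t < mA d + 2))%N then 1 else 0.
  have mz : map (meval z) G = 1 :: 1 :: nseq m 0.
    rewrite /G -map_comp (_ : iota 0 l.+1 = iota 0 m.+2); last by rewrite lm.
    have e0 : forall i, (i < m.+2)%N -> (meval z \o gvar d l) i = if (i < 2)%N then 1 else 0.
      move=> i hi /=.
      have hu : (mA d + i < mA d + l.+1)%N by rewrite ltn_add2l lm.
      rewrite /gvar (XnE hu) mevalXU /z /=.
      by rewrite leq_addr /= ltn_add2l.
    transitivity (map (fun i => if (i < 2)%N then (1 : CC) else 0) (iota 0 m.+2)).
      by apply/eq_in_map => i; rewrite mem_iota add0n => /e0.
    rewrite /=; congr (_ :: _ :: _).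
    transitivity (map (fun _ => (0 : CC)) (iota 2 m)).
      by apply/eq_in_map => i; rewrite mem_iota => /andP [h _]; rewrite ltnNge h.
    by rewrite -[X in nseq X _](size_iota 2 m); elim: (iota 2 m) => //= x r ->.
  apply/negP => /eqP h0.
  have := congr1 (meval z) h0; rewrite meval0 T_map mz.
  by apply/eqP; apply: Tval_nz.
have [mu hmu] : exists mu, mu \in msupp (T d d m k G).
  case E: (msupp (T d d m k G)) => [|mu r]; last by exists mu; rewrite mem_head.
  by move/eqP: E; rewrite msupp_eq0 (negbTE nz).
have ht : (triIdx d d < mA d)%N by apply: triIdx_lt.
have ht' : (triIdx d d < mA d + l.+1)%N by apply: leq_trans ht (leq_addr _ _).
pose tau : 'I_(mA d + l.+1) := Ordinal ht'.
have mu_tau : mu tau = 0%N := @aZ0_coord (mA d + l.+1) (mA d) mu tau (hT2 d d mu hmu) ht.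
pose mo := (U_(tau) + mu)%MM.
have wmo : wtZ (mA d + l.+1) (mA d) mo = Dm%:Z.
  rewrite /mo (wtZD _ _ U_(tau) mu) (wtZU _ _ tau).
  have -> : (mA d <= tau)%N = false by rewrite leqNgt (ht : (tau < mA d)%N).
  rewrite add0r (hT1 d d mu hmu) (subzn (ltnW md)) (subzn (leq_trans km (ltnW md))) -PoszD /Dm.
  congr Posz; rewrite lm; lia.
have coef : forall i j : 'I_d.+1, (A i j * T i j m k G)@_mo
    = if (i == ord_max) && (j == ord_max) then (T d d m k G)@_mu else 0.
  move=> i j.
  have hs : (triIdx i j < mA d + l.+1)%N.
    by apply: leq_trans (triIdx_lt d i j (ltn_ord i) (ltn_ord j)) (leq_addr _ _).
  rewrite /A (XnE hs) mulrC.
  case: ifP => [/andP [/eqP ei /eqP ej] | hne].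
    subst i j.
    have -> : Ordinal hs = tau by apply: val_inj.
    by rewrite /mo mcoeffMX.
  apply: memN_msupp_eq0; apply/negP.
  rewrite (perm_mem (msuppMX _ _)) => /mapP [m' hm' e].
  have := congr1 (fun mm : 'X_{1..(mA d + l.+1)} => mm tau) e.
  rewrite /mo /= !mnmDE !mnm1E eqxx mu_tau.
  have -> : m' tau = 0%N := @aZ0_coord (mA d + l.+1) (mA d) m' tau (hT2 i j m' hm') ht.
  have -> : (Ordinal hs == tau) = false.
    apply/negP => /eqP /(congr1 val) /= e2.
    have [ei ej] := triIdx_eq d i j (ltn_ord i) (ltn_ord j) e2.
    move: hne; rewrite -!val_eqE /= ei ej eqxx.
    by [].
  by [].
have cmo : (Cf d A m k G)@_mo = (T d d m k G)@_mu.
  rewrite /Cf raddf_sum (eq_bigr (fun i => if i == ord_max then (T d d m k G)@_mu else 0)).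
    by rewrite -big_mkcond big_pred1_eq.
  move=> i _; rewrite raddf_sum.
  rewrite (eq_bigr (fun j => if (i == ord_max) && (j == ord_max) then (T d d m k G)@_mu else 0)) => [|j _]; last exact: coef.
  case: (i == ord_max) => /=; [by rewrite -big_mkcond big_pred1_eq | by rewrite big1].
have hin : mo \in msupp (Cf d A m k G).
  by rewrite mcoeff_msupp cmo -mcoeff_msupp.
rewrite /xdeg; apply/eqP; rewrite eqn_leq; apply/andP; split.
  apply/bigmax_leqP_seq => mo' hmo' _.
  by have := ub mo' hmo'; rewrite /wtZ lez_nat.
move: wmo; rewrite /wtZ => /eqP; rewrite eqz_nat => /eqP <-.
exact: (leq_bigmax_seq mo hin).
Qed.

Theorem mainTheorem11 (n d l : nat) (e : rel 'I_n) (v : 'I_l.+1 -> 'I_n) :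
  simple_graph e -> connected_graph e -> regular_graph e d ->
  (1 <= l <= d)%N ->
  injective v -> (forall i j, i != j -> e (v i) (v j)) ->
  forall k : nat, (k <= l.-1)%N ->
    [/\ vanI (Uset d n e)
          (PhiLk d (avar d n) l.-1 k [seq xvar d n (v i) | i <- enum 'I_l.+1]),
        (forall sigma : 'S_l.+1, (forall i : 'I_l.+1, (i <= k)%N -> sigma i = i) ->
           comp_mpoly (renameX d l sigma) (PhiGen d l k) = PhiGen d l k)
      & xdeg d l (PhiGen d l k) = (2 * d + 1 - l - k)%N].
Proof.
move=> _ _ _ hld inj cl k hk.
have hl : (1 <= l)%N by case/andP: hld.
split.
- exact: partI.
- by move=> sigma hs; apply: partII.
- exact: partIII.
Qed.
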